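(* Let $N>1$ and $s,r\in\mathbb{N}$. The number of pairs $(a,b)\in\{1,\dots,N\}^2$ such that \[ \frac{b\,(s\,t^2+r\,t)}{s\,a^2+r\,a}\notin\mathbb{Z}\quad\text{for all integers }1\le t<a \] equals \[ \sum_{a=1}^{N}\ \sum_{J\subseteq\{1,\dots,a-1\}}(-1)^{|J|}\left\lfloor\frac{N}{\operatorname{lcm}(m_{a,t}:t\in J)}\right\rfloor, \qquad m_{a,t}=\frac{a(sa+r)}{\gcd\bigl(a(sa+r),\,t(st+r)\bigr)}. \]
   Context: $\mathbb{N}$ denotes the positive integers; $\operatorname{lcm}$ over the empty set is $1$. *)

(* Defs.v *)
From mathcomp Require Import all_boot all_order all_algebra.
Set Implicit Arguments. Unset Strict Implicit. Unset Printing Implicit Defensive.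

Definition qsr (s r x : nat) : nat := s * x ^ 2 + r * x.

Definition m_at (s r a t : nat) : nat :=
  (a * (s * a + r)) %/ gcdn (a * (s * a + r)) (t * (s * t + r)).

Definition good (s r a b : nat) : bool :=
  [forall t : 'I_a, (0 < val t) ==> ~~ (qsr s r a %| b * qsr s r (val t))].

(* Main.v *)
Require Import Defs.
From mathcomp Require Import all_boot all_order all_algebra.
Import GRing.Theory.

Lemma key_dvd A B b : 0 < A -> (A %| b * B) = (A %/ gcdn A B %| b).
Proof.
move=> A0.
have g0 : 0 < gcdn A B by rewrite gcdn_gt0 A0.
have eA := divnK (dvdn_gcdl A B).
have eB := divnK (dvdn_gcdr A B).
set g := gcdn A B in g0 eA eB *.
have cop : coprime (A %/ g) (B %/ g).
  rewrite /coprime; apply/eqP.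
  have := muln_gcdl (A %/ g) (B %/ g) g; rewrite eA eB -/g => h.
  by apply/eqP; rewrite -(eqn_pmul2r g0) mul1n {1}h.
rewrite -{1}eA -{1}eB mulnA dvdn_pmul2r //.
by rewrite Gauss_dvdl.
Qed.

Lemma alt_sum (I : finType) (T : {set I}) :
  (\sum_(J in powerset T) (-1) ^+ #|J| : int)%R = ((T == set0)%:R)%R.
Proof.
case: (set_0Vmem T) => [->|[x xT]].
  by rewrite powerset0 big_set1 cards0 expr0 eqxx.
have -> : (T == set0) = false by apply/negbTE/set0Pn; exists x.
set h := fun J : {set I} => if x \in J then J :\ x else x |: J.
have hK : involutive h.
  move=> J; rewrite /h; case: (boolP (x \in J)) => xJ.
    by rewrite !inE eqxx /= setD1K.
  by rewrite !inE eqxx /= setU1K.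
set S := (\sum_(J in powerset T) _)%R.
have Hs : S = (- S)%R.
  rewrite {1}/S (reindex_inj (can_inj hK)) /= -sumrN.
  apply: eq_big => J.
    rewrite !powersetE /h; case: (boolP (x \in J)) => xJ.
      apply/subsetP/subsetP => H y.
        by case: (eqVneq y x) => [->//|ne] yJ; apply: H; rewrite !inE ne.
      by rewrite !inE => /andP[_ yJ]; exact: H.
    by rewrite subUset sub1set xT.
  move=> _; rewrite /h; case: (boolP (x \in J)) => xJ.
    by rewrite (cardsD1 x J) xJ exprS mulN1r opprK.
  by rewrite cardsU1 xJ exprS mulN1r.
have : (S *+ 2 == 0)%R by rewrite mulr2n {2}Hs addrN.
by rewrite Num.Theory.mulrn_eq0 => /eqP.
Qed.

Lemma count_mult N d : \sum_(1 <= b < N.+1) (d %| b : nat) = N %/ d.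
Proof.
case: d => [|d].
  rewrite divn0 big_nat_cond big1 // => b /andP[/andP[b0 _] _].
  by rewrite dvd0n gtn_eqF.
elim: N => [|N IH]; first by rewrite big_geq.
by rewrite big_nat_recr //= IH divnS // addnC.
Qed.

Lemma qsrE s r x : qsr s r x = x * (s * x + r).
Proof. by rewrite /qsr mulnDr mulnCA mulnn (mulnC x r). Qed.

Theorem theorem3p8 (N s r : nat) (hN : 1 < N) (hs : 0 < s) (hr : 0 < r) :
  ((#|[set p : 'I_N.+1 * 'I_N.+1 |
       [&& 0 < val p.1, 0 < val p.2 & good s r (val p.1) (val p.2)]%N]|)%:Z =
   \sum_(1 <= a < N.+1)
     \sum_(J in powerset [set t : 'I_a | (0 < val t)%N])
       (-1) ^+ #|J| * (N %/ \big[lcmn/1%N]_(t in J) m_at s r a (val t))%:Z)%R.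
Proof.
have L : #|[set p : 'I_N.+1 * 'I_N.+1 |
       [&& 0 < val p.1, 0 < val p.2 & good s r (val p.1) (val p.2)]%N]| =
   \sum_(1 <= a < N.+1) \sum_(1 <= b < N.+1) (good s r a b : nat).
  transitivity (\sum_(i < N.+1) \sum_(j < N.+1)
      ([&& 0 < val i, 0 < val j & good s r i j] : nat)).
    rewrite pair_bigA /= -sum1_card big_mkcond; apply: eq_bigr => p _.
    by rewrite inE; case: (_ && _).
  rewrite -(big_mkord xpredT (fun i => \sum_(j < N.+1)
      ([&& 0 < i, 0 < val j & good s r i j] : nat))).
  rewrite big_ltn // [X in X + _]big1 // add0n.
  apply: eq_big_nat => a /andP[a1 _].
  rewrite -(big_mkord xpredT (fun j => ([&& 0 < a, 0 < j & good s r a j] : nat))).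
  rewrite big_ltn // a1 /= add0n.
  by apply: eq_big_nat => b /andP[b1 _]; rewrite b1.
rewrite L -natz natr_sum; apply: eq_big_nat => a /andP[a1 _].
under [RHS]eq_bigr => J _ do rewrite -count_mult -natz natr_sum mulr_sumr.
rewrite exchange_big natr_sum /=; apply: eq_big_nat => b /andP[b1 _].
set S := [set t : 'I_a | (0 < val t)%N].
set T := [set t : 'I_a | (0 < val t) && (m_at s r a t %| b)].
have Hk : forall t : 'I_a, (qsr s r a %| b * qsr s r t) = (m_at s r a t %| b).
  move=> t; rewrite !qsrE key_dvd //.
  by rewrite muln_gt0 a1 addn_gt0 hr orbT.
have -> : good s r a b = (T == set0).
  rewrite /good; apply/forallP/eqP => [H | H t].
    apply/setP => t; rewrite !inE; move: (H t); rewrite Hk.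
    by case: (0 < val t); case: (_ %| _).
  rewrite Hk; apply/implyP => t0; apply/negP => d.
  have : t \in T by rewrite inE t0 d.
  by rewrite H inE.
rewrite -alt_sum big_mkcond [RHS]big_mkcond; apply: eq_bigr => J _.
rewrite !powersetE.
have -> : (J \subset T) = (J \subset S) && (\big[lcmn/1%N]_(t in J) m_at s r a t %| b).
  apply/idP/andP => [sJT | [sJS dL]].
    split.
      apply: subset_trans sJT _; apply/subsetP => t; rewrite !inE => /andP[]//.
    apply/dvdn_biglcmP => t tJ; have := subsetP sJT t tJ; rewrite inE => /andP[]//.
  apply/subsetP => t tJ; rewrite inE; have := subsetP sJS t tJ; rewrite inE => ->.
  by move/dvdn_biglcmP: dL => /(_ t tJ).
by case: (J \subset S); case: (_ %| _); rewrite /= ?mulr1 ?mulr0.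
Qed.
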